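(* Let $\alpha\in(\frac{2\pi}{3},\pi)$. Then $M_b^\|(n,\alpha)\geq 6n-O(\sqrt{n})$, i.e., there is a constant $c>0$ such that for every positive integer $n$ there exists an $\alpha$-bend multigraph on $n$ vertices with at least $6n-c\sqrt{n}$ edges.
   Context: For $\alpha\in(0,\pi)$, an $\alpha$-bend edge between points $a$ and $c$ is a polyline $(a,b,c)$ with a single bend point $b$ (not on the line $ac$) such that the interior angle of the triangle $abc$ at $b$ equals $\alpha$. An $\alpha$-bend multigraph is a multigraph embedded in the plane (vertices are distinct points; edges pairwise do not cross, meet only at common endpoints, and contain no vertex in their relative interior; parallel edges allowed) in which every edge is an $\alpha$-bend edge. $M_b^\|(n,\alpha)$ is the supremum, over all $n$-element sets $P\subset\mathbb{R}^2$, of the maximum number of edges of an $\alpha$-bend multigraph with vertex set $P$. *)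

(* Defs.v *)
From Stdlib Require Import Reals Lra List.
Open Scope R_scope.

Definition point : Type := (R * R)%type.

Definition psub (p q : point) : point := (fst p - fst q, snd p - snd q).
Definition dot (u v : point) : R := fst u * fst v + snd u * snd v.
Definition vnorm (u : point) : R := sqrt (dot u u).
Definition cross (u v : point) : R := fst u * snd v - snd u * fst v.

Definition on_seg (p q x : point) : Prop :=
  exists t, 0 <= t <= 1 /\
    x = (fst p + t * (fst q - fst p), snd p + t * (snd q - snd p)).

Definition on_line (a c b : point) : Prop := cross (psub c a) (psub b a) = 0.

Definition angle_at (a b c : point) : R :=
  acos (dot (psub a b) (psub c b) / (vnorm (psub a b) * vnorm (psub c b))).

(* an edge is a polyline (a, b, c): endpoints a, c and bend point b *)
Definition edge : Type := (point * point * point)%type.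
Definition e_a (e : edge) : point := fst (fst e).
Definition e_b (e : edge) : point := snd (fst e).
Definition e_c (e : edge) : point := snd e.

Definition on_edge (e : edge) (x : point) : Prop :=
  on_seg (e_a e) (e_b e) x \/ on_seg (e_b e) (e_c e) x.

Definition is_endpoint (e : edge) (x : point) : Prop := x = e_a e \/ x = e_c e.

Definition alpha_bend_edge (alpha : R) (e : edge) : Prop :=
  e_a e <> e_c e /\ ~ on_line (e_a e) (e_c e) (e_b e) /\
  angle_at (e_a e) (e_b e) (e_c e) = alpha.

(* alpha-bend multigraph with vertex set P (a duplicate-free list of points)
   and edge list E (a list, so parallel edges are allowed) *)
Definition alpha_bend_multigraph (alpha : R) (P : list point) (E : list edge) : Prop :=
  NoDup P /\
  (forall e, In e E -> alpha_bend_edge alpha e /\ In (e_a e) P /\ In (e_c e) P) /\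
  (forall e v, In e E -> In v P -> on_edge e v -> is_endpoint e v) /\
  (forall i j, (i < length E)%nat -> (j < length E)%nat -> i <> j ->
     forall x, on_edge (nth i E ((0,0),(0,0),(0,0))) x ->
               on_edge (nth j E ((0,0),(0,0),(0,0))) x ->
     is_endpoint (nth i E ((0,0),(0,0),(0,0))) x /\
     is_endpoint (nth j E ((0,0),(0,0),(0,0))) x).

(* Main.v *)
Require Import Defs.
From Stdlib Require Import Reals Lra List Lia Psatz Arith.
Open Scope R_scope.

Definition r3 := sqrt 3.
Lemma r3sq : r3 * r3 = 3. Proof. unfold r3; apply sqrt_sqrt; lra. Qed.
Lemma r3pos : 0 < r3. Proof. unfold r3; apply sqrt_lt_R0; lra. Qed.

Definition L (u v : R) : point := (u + v/2, r3 * v / 2).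

Lemma L_inj u v u' v' : L u v = L u' v' -> u = u' /\ v = v'.
Proof.
  unfold L; intro H; injection H; intros H2 H1.
  pose proof r3pos.
  assert (v = v').
  { apply Rmult_eq_reg_l with (r3/2). lra. lra. }
  split; lra.
Qed.

Inductive dir := D0 | D1 | D2.
Definition ox d := match d with D0 => -1 | D1 => -2 | D2 => -1 end.
Definition oy d := match d with D0 => 2 | D1 => 1 | D2 => -1 end.
Definition ax d (i : nat) : nat := match d with D2 => S i | _ => i end.
Definition ay (d : dir) (j : nat) : nat := j.
Definition cx d (i : nat) : nat := match d with D0 => S i | _ => i end.
Definition cy d (j : nat) : nat := match d with D0 => j | _ => S j end.
Definition sg (b : bool) : R := if b then 1 else -1.

Definition mk (s : R) (i j : nat) (d : dir) (b : bool) : edge :=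
  (L (INR (ax d i)) (INR (ay d j)),
   L ((INR (ax d i) + INR (cx d i))/2 + sg b * s * ox d)
     ((INR (ay d j) + INR (cy d j))/2 + sg b * s * oy d),
   L (INR (cx d i)) (INR (cy d j))).

Definition LX s (i j : nat) d b l m :=
  INR (ax d i) + l * (INR (cx d i) - INR (ax d i)) + sg b * 2 * s * m * ox d.
Definition LY s (i j : nat) d b l m :=
  INR (ay d j) + l * (INR (cy d j) - INR (ay d j)) + sg b * 2 * s * m * oy d.

Lemma on_edge_param s i j d b x : on_edge (mk s i j d b) x ->
  exists l m, 0 <= l <= 1 /\ 0 <= m /\ m <= l /\ m <= 1 - l /\ (m = l \/ m = 1 - l) /\
   x = L (LX s i j d b l m) (LY s i j d b l m).
Proof.
  unfold on_edge, on_seg, mk, e_a, e_b, e_c; simpl.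
  intros [[t [Ht ->]] | [t [Ht ->]]].
  - exists (t/2), (t/2). repeat split; try lra.
    unfold L, LX, LY; simpl; f_equal; field.
  - exists ((1+t)/2), ((1-t)/2). repeat split; try lra.
    unfold L, LX, LY; simpl; f_equal; field.
Qed.

Lemma endpoint_of s i j d b l m : (m = l \/ m = 1 - l) -> m = 0 ->
  is_endpoint (mk s i j d b) (L (LX s i j d b l m) (LY s i j d b l m)).
Proof.
  intros Hl ->. unfold is_endpoint, mk, e_a, e_c; simpl.
  destruct Hl as [Hl|Hl].
  - rewrite <- Hl. left; unfold LX, LY. f_equal; ring.
  - assert (l = 1) as -> by lra. right; unfold LX, LY; f_equal; ring.
Qed.

Lemma nat_tri (n k : nat) : INR n <= INR k \/ INR k + 1 <= INR n.
Proof.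
  destruct (le_lt_dec n k) as [H|H].
  - left; apply le_INR; exact H.
  - right; rewrite <- S_INR; apply le_INR; exact H.
Qed.

Lemma near_far (n k : nat) e f a b : INR n + e = INR k + f -> -a <= e <= a ->
  b <= f <= 1 - b -> b <= a.
Proof. intros. destruct (nat_tri n k); lra. Qed.

Lemma near_near (n k : nat) e f : INR n + e = INR k + f -> -1/2 < e < 1/2 ->
  -1/2 < f < 1/2 -> n = k.
Proof.
  intros. destruct (nat_tri n k); destruct (nat_tri k n).
  - apply INR_eq; lra.
  - lra.
  - lra.
  - lra.
Qed.

Lemma int_step (n k : nat) l l' : INR n + l = INR k + l' -> 0 <= l <= 1 -> 0 <= l' <= 1 ->
  n = k \/ ((l = 0 \/ l = 1) /\ (l' = 0 \/ l' = 1)).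
Proof.
  intros. destruct (nat_tri n k); destruct (nat_tri k n).
  - left; apply INR_eq; lra.
  - right. split; [right|left]; lra.
  - right. split; [left|right]; lra.
  - lra.
Qed.

Lemma cross_conclude s m m' : 0 < s < 1/6 -> 0 <= m -> 0 <= m' ->
  m' - 2*s*m' <= 4*s*m -> m - 2*s*m <= 4*s*m' -> m = 0 /\ m' = 0.
Proof.
  intros. assert ((m + m') * (1 - 6*s) <= 0) by lra.
  destruct (Rle_lt_dec (m+m') 0). lra.
  assert (0 < (m+m') * (1-6*s)) by (apply Rmult_lt_0_compat; lra). lra.
Qed.

Lemma sm_zero s m : 0 < s -> s * m = 0 -> m = 0.
Proof. intros. destruct (Rmult_integral _ _ H0); lra. Qed.


Lemma near_far' (n k : nat) g a b : -a <= g - INR n <= a ->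
  b <= g - INR k <= 1 - b -> b <= a.
Proof. intros. apply (near_far n k (g - INR n) (g - INR k)); lra. Qed.

Lemma near_near' (n k : nat) g : -1/2 < g - INR n < 1/2 ->
  -1/2 < g - INR k < 1/2 -> n = k.
Proof. intros. apply (near_near n k (g - INR n) (g - INR k)); lra. Qed.

Ltac unf := unfold LX, LY, ax, ay, cx, cy, sg, ox, oy in *; rewrite ?S_INR, ?plus_INR in *.

Ltac cross n k g a b := let H := fresh in
  assert (H : b <= a) by (apply (near_far' n k g a b); destruct_all bool; unf; lra).

Ltac fin_cross s := apply (cross_conclude s); auto; lra.

Lemma core s i j d b i' j' d' b' l m l' m' :
  0 < s < 1/6 ->
  0 <= l <= 1 -> 0 <= m -> m <= l -> m <= 1 - l -> (m = l \/ m = 1 - l) ->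
  0 <= l' <= 1 -> 0 <= m' -> m' <= l' -> m' <= 1 - l' -> (m' = l' \/ m' = 1 - l') ->
  LX s i j d b l m = LX s i' j' d' b' l' m' ->
  LY s i j d b l m = LY s i' j' d' b' l' m' ->
  (i, j, d, b) <> (i', j', d', b') -> m = 0 /\ m' = 0.
Proof.
  intros Hs Hl Hm0 Hm1 Hm2 Hm3 Hl' Hm0' Hm1' Hm2' Hm3' HX HY Hne.
  assert (P1 : 0 <= s * m <= m / 6) by nra.
  assert (P2 : 0 <= s * m' <= m' / 6) by nra.
  destruct d, d'.
  -
    assert (j = j') as <-.
    { apply (near_near' j j' (LY s i j D0 b l m)); destruct_all bool; unf; lra. }
    destruct b, b'; unf.
    + destruct (int_step i i' l l') as [<- | [A B]]; try lra.
      exfalso; apply Hne; f_equal; f_equal; lra. 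
    + split; apply sm_zero with s; lra.
    + split; apply sm_zero with s; lra.
    + destruct (int_step i i' l l') as [<- | [A B]]; try lra.
      exfalso; apply Hne; f_equal; f_equal; lra. 
  - cross j j' (LY s i j D0 b l m) (4*s*m) (m' - 2*s*m').
    cross i' i (LX s i j D0 b l m) (4*s*m') (m - 2*s*m). fin_cross s.
  - cross j j' (LY s i j D0 b l m) (4*s*m) (m' - 2*s*m').
    cross (S (i'+j')) (i+j)%nat (LX s i j D0 b l m + LY s i j D0 b l m) (4*s*m') (m - 2*s*m). fin_cross s.
  - cross i i' (LX s i j D1 b l m) (4*s*m) (m' - 2*s*m').
    cross j' j (LY s i j D1 b l m) (4*s*m') (m - 2*s*m). fin_cross s.
  -
    assert (i = i') as <-.
    { apply (near_near' i i' (LX s i j D1 b l m)); destruct_all bool; unf; lra. }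
    destruct b, b'; unf.
    + destruct (int_step j j' l l') as [<- | [A B]]; try lra.
      exfalso; apply Hne; f_equal; f_equal; lra. 
    + split; apply sm_zero with s; lra.
    + split; apply sm_zero with s; lra.
    + destruct (int_step j j' l l') as [<- | [A B]]; try lra.
      exfalso; apply Hne; f_equal; f_equal; lra. 
  - cross i i' (LX s i j D1 b l m) (4*s*m) (m' - 2*s*m').
    cross (S (i'+j')) (i+j)%nat (LX s i j D1 b l m + LY s i j D1 b l m) (4*s*m') (m - 2*s*m). fin_cross s.
  - cross (S (i+j)) (i'+j')%nat (LX s i j D2 b l m + LY s i j D2 b l m) (4*s*m) (m' - 2*s*m').
    cross j' j (LY s i j D2 b l m) (4*s*m') (m - 2*s*m). fin_cross s.
  - cross (S (i+j)) (i'+j')%nat (LX s i j D2 b l m + LY s i j D2 b l m) (4*s*m) (m' - 2*s*m').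
    cross i' i (LX s i j D2 b l m) (4*s*m') (m - 2*s*m). fin_cross s.
  -
    assert (S (i+j) = S (i'+j')) as E.
    { apply (near_near' _ _ (LX s i j D2 b l m + LY s i j D2 b l m)); destruct_all bool; unf; lra. }
    pose proof E as E'. apply (f_equal INR) in E'. rewrite !S_INR, !plus_INR in E'.
    destruct b, b'; unf.
    + destruct (int_step j j' l l') as [<- | [A B]]; try lra.
      exfalso; apply Hne; assert (i = i') as <- by lia; f_equal; f_equal; lra. 
    + split; apply sm_zero with s; lra.
    + split; apply sm_zero with s; lra.
    + destruct (int_step j j' l l') as [<- | [A B]]; try lra.
      exfalso; apply Hne; assert (i = i') as <- by lia; f_equal; f_equal; lra. 
Qed.

Lemma vcore s i j d b l m (u v : nat) :
  0 < s < 1/6 ->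
  0 <= l <= 1 -> 0 <= m -> m <= l -> m <= 1 - l ->
  LX s i j d b l m = INR u -> LY s i j d b l m = INR v -> m = 0.
Proof.
  intros Hs Hl Hm0 Hm1 Hm2 HX HY.
  assert (P1 : 0 <= s * m <= m / 6) by nra.
  destruct d.
  - assert (j = v) as <-.
    { apply (near_near' j v (LY s i j D0 b l m)); destruct_all bool; unf; lra. }
    apply sm_zero with s; [lra|]. destruct b; unf; lra.
  - assert (i = u) as <-.
    { apply (near_near' i u (LX s i j D1 b l m)); destruct_all bool; unf; lra. }
    apply sm_zero with s; [lra|]. destruct b; unf; lra.
  - assert (S (i+j) = (u+v)%nat) as E.
    { apply (near_near' _ _ (LX s i j D2 b l m + LY s i j D2 b l m)); destruct_all bool; unf; lra. }
    apply (f_equal INR) in E. apply sm_zero with s; [lra|]. destruct b; unf; lra.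
Qed.

Lemma psubL a b c d : psub (L a b) (L c d) = L (a - c) (b - d).
Proof. unfold psub, L; simpl; f_equal; field. Qed.

Lemma dotL u1 v1 u2 v2 : dot (L u1 v1) (L u2 v2) = (u1 + v1/2)*(u2 + v2/2) + 3 * (v1 * v2) / 4.
Proof.
  unfold dot, L; simpl.
  replace (r3 * v1 / 2 * (r3 * v2 / 2)) with (r3 * r3 * (v1 * v2) / 4) by field.
  rewrite r3sq; ring.
Qed.

Lemma crossL u1 v1 u2 v2 : cross (L u1 v1) (L u2 v2) = r3 / 2 * (u1 * v2 - v1 * u2).
Proof. unfold cross, L; simpl; field. Qed.

Lemma mk_dots s i j d b :
  let e := mk s i j d b in
  dot (psub (e_a e) (e_b e)) (psub (e_c e) (e_b e)) = 3 * s^2 - 1/4 /\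
  dot (psub (e_a e) (e_b e)) (psub (e_a e) (e_b e)) = 3 * s^2 + 1/4 /\
  dot (psub (e_c e) (e_b e)) (psub (e_c e) (e_b e)) = 3 * s^2 + 1/4 /\
  cross (psub (e_c e) (e_a e)) (psub (e_b e) (e_a e)) = r3 * sg b * s /\
  e_a e <> e_c e.
Proof.
  simpl. unfold mk, e_a, e_b, e_c; simpl.
  rewrite !psubL, !dotL, !crossL.
  destruct d, b; unfold ax, ay, cx, cy, sg, ox, oy; rewrite ?S_INR;
  (split; [field|split; [field|split; [field|split; [field|]]]]);
  intro H; apply L_inj in H; lra.
Qed.

Lemma mk_alpha alpha s i j d b : 0 <= alpha <= PI -> 0 < s ->
  (3 * s^2 - 1/4) / (3 * s^2 + 1/4) = cos alpha ->
  alpha_bend_edge alpha (mk s i j d b).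
Proof.
  intros Ha Hs Hc.
  destruct (mk_dots s i j d b) as (H1 & H2 & H3 & H4 & H5).
  split; [exact H5|split].
  - unfold on_line. rewrite H4. pose proof r3pos.
    destruct b; unfold sg; intro; nra.
  - unfold angle_at, vnorm. rewrite H1, H2, H3.
    rewrite sqrt_sqrt by nra. rewrite Hc. apply acos_cos; lra.
Qed.

Lemma choose_s alpha : 2 * PI / 3 < alpha < PI ->
  exists s, 0 < s < 1/6 /\ (3 * s^2 - 1/4) / (3 * s^2 + 1/4) = cos alpha.
Proof.
  intros Ha. pose proof PI_RGT_0 as HP.
  set (k := cos alpha).
  assert (Hk1 : k < -1/2).
  { unfold k. replace (-1/2) with (cos (2*PI/3)).
    - apply cos_decreasing_1; lra.
    - replace (2*PI/3) with (PI - PI/3) by field. rewrite Rtrigo_facts.cos_pi_minus, cos_PI3. field. }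
  assert (Hk2 : -1 < k).
  { unfold k. rewrite <- cos_PI. apply cos_decreasing_1; lra. }
  exists (sqrt ((1+k)/(12*(1-k)))).
  assert (Hq : 0 < (1+k)/(12*(1-k))) by (apply Rdiv_lt_0_compat; lra).
  assert (Hsq : sqrt ((1+k)/(12*(1-k))) ^ 2 = (1+k)/(12*(1-k))).
  { rewrite <- Rsqr_pow2. apply Rsqr_sqrt. lra. }
  split; [split|].
  - apply sqrt_lt_R0; exact Hq.
  - assert ((1+k)/(12*(1-k)) < 1/36).
    { apply Rmult_lt_reg_r with (12*(1-k)). lra. field_simplify; lra. }
    replace (1/6) with (sqrt (1/36)).
    + apply sqrt_lt_1; lra.
    + replace (1/36) with ((1/6)*(1/6)) by field. apply sqrt_square; lra.
  - rewrite Hsq. field. lra.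
Qed.

Lemma NoDup_prod {A B : Type} (l : list A) (l' : list B) :
  NoDup l -> NoDup l' -> NoDup (list_prod l l').
Proof.
  induction 1 as [|a l Ha Hl IH]; intros Hl'; simpl. constructor.
  apply NoDup_app.
  - apply NoDup_map_NoDup_ForallPairs; auto. intros x y _ _ H; now injection H.
  - now apply IH.
  - intros [x y] H1 H2. apply in_map_iff in H1 as [z [Hz _]]. injection Hz as <- <-.
    apply in_prod_iff in H2 as [H2 _]. contradiction.
Qed.

Definition Desc (w q : nat) :=
  list_prod (list_prod (list_prod (seq 0 (w-1)) (seq 0 (q-1))) (D0 :: D1 :: D2 :: nil)) (true :: false :: nil).
Definition mkd s (x : ((nat*nat)*dir)*bool) : edge :=
  match x with (((i,j),d),b) => mk s i j d b end.
Definition Vs (w n : nat) : list point :=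
  map (fun k => L (INR (k mod w)) (INR (k / w))) (seq 0 n).

Lemma Desc_NoDup w q : NoDup (Desc w q).
Proof.
  unfold Desc. repeat apply NoDup_prod; try apply seq_NoDup.
  - repeat constructor; simpl; intuition discriminate.
  - repeat constructor; simpl; intuition discriminate.
Qed.

Lemma Desc_len w q : length (Desc w q) = ((w-1)*(q-1)*3*2)%nat.
Proof. unfold Desc. rewrite !length_prod, !length_seq. reflexivity. Qed.

Lemma Vs_len w n : length (Vs w n) = n.
Proof. unfold Vs. rewrite length_map, length_seq. reflexivity. Qed.

Lemma Vs_NoDup w n : (0 < w)%nat -> NoDup (Vs w n).
Proof.
  intros Hw. unfold Vs. apply NoDup_map_NoDup_ForallPairs; [|apply seq_NoDup].
  intros x y _ _ H. apply L_inj in H as [H1 H2].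
  apply INR_eq in H1, H2.
  rewrite (Nat.div_mod_eq x w), (Nat.div_mod_eq y w). lia.
Qed.

Lemma Vs_in w q n a b : (0 < w)%nat -> (q * w <= n)%nat -> (a < w)%nat -> (b < q)%nat ->
  In (L (INR a) (INR b)) (Vs w n).
Proof.
  intros Hw Hq Ha Hb. unfold Vs. apply in_map_iff. exists (b * w + a)%nat. split.
  - assert ((b * w + a) mod w = a)%nat as ->.
    { symmetry. apply (Nat.mod_unique _ _ b); lia. }
    assert ((b * w + a) / w = b)%nat as ->.
    { symmetry. apply (Nat.div_unique _ _ _ a); lia. }
    reflexivity.
  - apply in_seq. nia.
Qed.

Lemma Vs_form w n v : In v (Vs w n) -> exists a b : nat, v = L (INR a) (INR b).
Proof. unfold Vs. intros H; apply in_map_iff in H as [k [<- _]]. eauto. Qed.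

Lemma count_nat n w q : (1 <= w)%nat -> (w * w <= n)%nat -> (n < S w * S w)%nat ->
  (q * w <= n)%nat -> (n < q * w + w)%nat ->
  (6 * n <= (w-1)*(q-1)*3*2 + 24 * w)%nat.
Proof.
  intros. assert (q <= w + 2)%nat by nia.
  assert (1 <= q)%nat by nia.
  destruct w as [|w']; [lia|]. destruct q as [|q']; [lia|].
  rewrite !Nat.sub_succ, !Nat.sub_0_r. nia.
Qed.

Theorem proposition12 (alpha : R) (Halpha : 2 * PI / 3 < alpha < PI) :
  exists c : R, c > 0 /\
    forall n : nat, (1 <= n)%nat ->
      exists (P : list point) (E : list edge),
        length P = n /\ alpha_bend_multigraph alpha P E /\
        INR (length E) >= 6 * INR n - c * sqrt (INR n).
Proof.
  destruct (choose_s alpha Halpha) as [s [Hs Hc]].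
  pose proof PI_RGT_0 as HPI.
  exists 24. split; [lra|]. intros n Hn.
  set (w := Nat.sqrt n). set (q := (n / w)%nat).
  pose proof (Nat.sqrt_spec' n) as [Hw1 Hw2]. fold w in Hw1, Hw2.
  assert (Hw : (1 <= w)%nat).
  { destruct w as [|w']; [simpl in Hw2; lia| lia]. }
  assert (Hq1 : (q * w <= n)%nat).
  { unfold q. rewrite Nat.mul_comm. apply Nat.Div0.mul_div_le. }
  assert (Hq2 : (n < q * w + w)%nat).
  { unfold q. pose proof (Nat.div_mod_eq n w). pose proof (Nat.mod_upper_bound n w). lia. }
  clearbody w q.
  exists (Vs w n), (map (mkd s) (Desc w q)).
  split; [apply Vs_len|]. split.
  - split; [apply Vs_NoDup; lia|]. split; [|split].
    + intros e He. apply in_map_iff in He as [[[[i j] d] b] [<- Hx]].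
      unfold Desc in Hx. apply in_prod_iff in Hx as [Hx _].
      apply in_prod_iff in Hx as [Hx _]. apply in_prod_iff in Hx as [Hi Hj].
      apply in_seq in Hi, Hj. simpl.
      split; [apply mk_alpha; lra|].
      split; apply (Vs_in w q); try lia; destruct d; unfold ax, ay, cx, cy; lia.
    + intros e v He Hv Hon. apply in_map_iff in He as [[[[i j] d] b] [<- _]].
      simpl in Hon |- *.
      destruct (Vs_form _ _ _ Hv) as [a [b' ->]].
      destruct (on_edge_param _ _ _ _ _ _ Hon) as (l & m & Hl & Hm0 & Hm1 & Hm2 & Hm3 & Hx).
      rewrite Hx. apply endpoint_of; auto.
      apply L_inj in Hx as [HX HY].
      apply (vcore s i j d b l m a b'); auto; lra.
    + intros i1 i2 Hi1 Hi2 Hne x H1 H2.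
      rewrite length_map in Hi1, Hi2.
      set (d0 := (((0%nat,0%nat),D0),true)).
      assert (E1 : nth i1 (map (mkd s) (Desc w q)) ((0,0),(0,0),(0,0)) = mkd s (nth i1 (Desc w q) d0)).
      { rewrite (@nth_indep _ (map (mkd s) (Desc w q)) i1 _ (mkd s d0)) by (rewrite length_map; exact Hi1).
        apply map_nth. }
      assert (E2 : nth i2 (map (mkd s) (Desc w q)) ((0,0),(0,0),(0,0)) = mkd s (nth i2 (Desc w q) d0)).
      { rewrite (@nth_indep _ (map (mkd s) (Desc w q)) i2 _ (mkd s d0)) by (rewrite length_map; exact Hi2).
        apply map_nth. }
      rewrite E1, E2 in *.
      assert (Hd : nth i1 (Desc w q) d0 <> nth i2 (Desc w q) d0).
      { intro E. apply Hne. eapply (proj1 (NoDup_nth _ d0)); eauto. apply Desc_NoDup. }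
      revert Hd H1 H2.
      destruct (nth i1 (Desc w q) d0) as [[[ia ja] da] ba].
      destruct (nth i2 (Desc w q) d0) as [[[ib jb] db] bb].
      simpl. intros Hd H1 H2.
      destruct (on_edge_param _ _ _ _ _ _ H1) as (l & m & Hl & Hm0 & Hm1 & Hm2 & Hm3 & Hx).
      destruct (on_edge_param _ _ _ _ _ _ H2) as (l' & m' & Hl' & Hm0' & Hm1' & Hm2' & Hm3' & Hx').
      assert (Hmm : m = 0 /\ m' = 0).
      { rewrite Hx in Hx'. apply L_inj in Hx' as [HX HY].
        apply (core s ia ja da ba ib jb db bb l m l' m'); auto; lra. }
      destruct Hmm as [Hm Hm'].
      split.
      * rewrite Hx. apply endpoint_of; auto.
      * rewrite Hx'. apply endpoint_of; auto.
  - rewrite length_map, Desc_len.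
    pose proof (count_nat n w q Hw Hw1 Hw2 Hq1 Hq2) as Hc'.
    apply le_INR in Hc'. rewrite plus_INR, !mult_INR in Hc'.
    assert (Hs3 : INR w <= sqrt (INR n)).
    { rewrite <- (sqrt_square (INR w)) by apply pos_INR.
      apply sqrt_le_1_alt. rewrite <- mult_INR. apply le_INR. exact Hw1. }
    simpl (INR 6) in Hc'. simpl (INR 24) in Hc'.
    rewrite !mult_INR. simpl (INR 3) in *. simpl (INR 2) in *. lra.
Qed.
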